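(* Let $R$ be an associative ring with identity, let $a,b,c\in R$ and put $t=cab$. Suppose $t$ is regular. Then the following are equivalent: (i) $a$ has a $(b,c)$-inverse; (ii) $r(a)\cap bR=\{0\}$ and $R=abR\oplus r(c)$; (iii) $r(t)=r(b)$ and $tR=cR$; (iv) $l(t)=l(c)$ and $Rt=Rb$; (v) $l(t)=l(c)$ and $r(t)=r(b)$.
   Context: For $a,b,c\in R$, $a$ is $(b,c)$-invertible if there exists $y\in R$ with $y\in (bRy)\cap(yRc)$, $yab=b$ and $cay=c$; such $y$ is unique and called the $(b,c)$-inverse of $a$, denoted $a^{\|(b,c)}$. An element is regular if $x=xzx$ for some $z\in R$. For $x\in R$: $l(x)=\{z\in R:zx=0\}$, $r(x)=\{z\in R:xz=0\}$, $xR=\{xz:z\in R\}$, $Rx=\{zx:z\in R\}$; $\oplus$ denotes an internal direct sum of right ideals (additive subgroups). *)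

(* Defs.v *)
(* R : pzRingType = associative ring with identity (0 = 1 allowed). *)
From HB Require Import structures.
From mathcomp Require Import all_boot all_algebra.
Set Implicit Arguments. Unset Strict Implicit. Unset Printing Implicit Defensive.
Import GRing.Theory.
Local Open Scope ring_scope.

Section Defs.
Variable R : pzRingType.

Definition rann (x : R) : R -> Prop := fun z => x * z = 0.
Definition lann (x : R) : R -> Prop := fun z => z * x = 0.
Definition rideal (x : R) : R -> Prop := fun z => exists w, z = x * w.
Definition lideal (x : R) : R -> Prop := fun z => exists w, z = w * x.

Definition seteq (A B : R -> Prop) : Prop := forall z, A z <-> B z.

Definition cap_zero (A B : R -> Prop) : Prop :=
  forall z, (A z /\ B z) <-> z = 0.

Definition full_direct_sum (A B : R -> Prop) : Prop :=
  (forall x, exists p q, A p /\ B q /\ x = p + q) /\ cap_zero A B.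

Definition regular (x : R) : Prop := exists z, x = x * z * x.

Definition is_bc_inverse (a b c y : R) : Prop :=
  (exists u, y = b * u * y) /\ (exists v, y = y * v * c) /\
  y * a * b = b /\ c * a * y = c.

Definition bc_invertible (a b c : R) : Prop := exists y, is_bc_inverse a b c y.

End Defs.

(* Main.v *)
Require Import Defs.
From HB Require Import structures.
From mathcomp Require Import all_boot all_algebra.
Import GRing.Theory.
Local Open Scope ring_scope.

Section Aux.
Variable R : pzRingType.
Variables a b c t z : R.
Hypothesis ht : t = c * a * b.
Hypothesis hz : t = t * z * t.

Definition PP := (exists s, b = s * t) /\ (exists w, c = t * w).

Lemma Linv : bc_invertible a b c <-> PP.
Proof.
split.
  move=> [y [[u hu] [[v hv] [h1 h2]]]]; split.
    exists (y * v); rewrite ht -{1}h1 {1}hv !mulrA //.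
  exists (u * y); rewrite ht -{1}h2 {1}hu !mulrA //.
move=> [[s hs] [w hw]].
have tzc : t * z * c = c by rewrite hw mulrA -hz.
have bzt : b * z * t = b by rewrite hs -!mulrA [t * (z * t)]mulrA -hz.
exists (b * z * c); split; [|split; [|split]].
- exists (z * c * a).
  rewrite (_ : b * (z * c * a) * (b * z * c) = b * z * (c * a * b) * z * c);
    last by rewrite !mulrA.
  by rewrite -ht bzt.
- exists (a * b * z).
  rewrite (_ : b * z * c * (a * b * z) * c = b * z * (c * a * b) * z * c);
    last by rewrite !mulrA.
  by rewrite -ht bzt.
- rewrite (_ : b * z * c * a * b = b * z * (c * a * b)); last by rewrite !mulrA.
  by rewrite -ht.
- rewrite (_ : c * a * (b * z * c) = (c * a * b) * z * c); last by rewrite !mulrA.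
  by rewrite -ht.
Qed.

Lemma K2 : (forall x, t * x = 0 -> b * x = 0) <-> exists s, b = s * t.
Proof.
split.
  move=> H.
  have := H (1 - z * t).
  rewrite mulrBr mulr1 mulrA -hz subrr => /(_ erefl) /eqP.
  rewrite mulrBr mulr1 subr_eq0 => /eqP hb.
  by exists (b * z); rewrite -mulrA.
move=> [s hs] x hx; by rewrite hs -mulrA hx mulr0.
Qed.

Lemma K3 : (forall x, x * t = 0 -> x * c = 0) <-> exists w, c = t * w.
Proof.
split.
  move=> H.
  have := H (1 - t * z).
  rewrite mulrBl mul1r -hz subrr => /(_ erefl) /eqP.
  rewrite mulrBl mul1r subr_eq0 => /eqP hc.
  by exists (z * c); rewrite mulrA.
move=> [w hw] x hx; by rewrite hw mulrA hx mul0r.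
Qed.

Lemma Rbt x : b * x = 0 -> t * x = 0.
Proof. by move=> h; rewrite ht -mulrA h mulr0. Qed.

Lemma Lct x : x * c = 0 -> x * t = 0.
Proof. by move=> h; rewrite ht !mulrA h !mul0r. Qed.

End Aux.
Arguments Linv {R a b c t z}.
Arguments K2 {R b t z}.
Arguments K3 {R c t z}.
Arguments Rbt {R a b c t}.
Arguments Lct {R a b c t}.

Theorem theorem3p4 (R : pzRingType) (a b c : R) :
  regular (c * a * b) ->
  let t := c * a * b in
  [/\ (bc_invertible a b c <->
         (cap_zero (rann a) (rideal b) /\ full_direct_sum (rideal (a * b)) (rann c))),
      (bc_invertible a b c <->
         (seteq (rann t) (rann b) /\ seteq (rideal t) (rideal c))),
      (bc_invertible a b c <->
         (seteq (lann t) (lann c) /\ seteq (lideal t) (lideal b))) &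
      (bc_invertible a b c <->
         (seteq (lann t) (lann c) /\ seteq (rann t) (rann b)))].
Proof.
move=> [z hz0] t0; rewrite /t0; clear t0.
have [t ht] : exists t, t = c * a * b by eexists.
rewrite -ht in hz0 *.
have hz := hz0.
have E := Linv ht hz.
split; apply: (iff_trans E).
- split.
  + move=> [[s hs] [w hw]].
    have tzc : t * z * c = c by rewrite hw mulrA -hz.
    split; [|split; [|]].
    * move=> y; split.
        move=> [hra [w' e]]; rewrite e in hra *.
        by rewrite hs ht -!mulrA hra !mulr0.
      move=> ->; split; [by rewrite /rann mulr0 | by exists 0; rewrite mulr0].
    * move=> x; exists (a * b * z * c * x), (x - a * b * z * c * x).
      split; [by exists (z * c * x); rewrite !mulrA|split].
        by rewrite /rann mulrBr !mulrA -ht tzc subrr.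
      by rewrite addrC subrK.
    * move=> y; split.
        move=> [[w' e] hc]; rewrite /rann e -!mulrA in hc; rewrite e.
        by rewrite -mulrA hs ht -!mulrA hc !mulr0.
      move=> ->; split; [by exists 0; rewrite mulr0 | by rewrite /rann mulr0].
  + move=> [hcap [hsum hcap2]]; split.
      apply/(K2 hz) => x hx.
      have h1 : a * b * x = 0.
        apply/(hcap2 (a * b * x)).1; split; first by exists x.
        by rewrite /rann !mulrA -ht.
      apply/(hcap (b * x)).1; split; last by exists x.
      by rewrite /rann mulrA.
    have [p [q [[w' ep] [hq e1]]]] := hsum 1.
    exists w'; rewrite -[c]mulr1 e1 mulrDr hq addr0 ep ht !mulrA //.
- split.
  + move=> [[s hs] [w hw]]; split.
      move=> x; split; last exact: (Rbt ht).
      by move=> hx; rewrite /rann hs -mulrA hx mulr0.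
    move=> y; split.
      by move=> [w' ->]; exists (a * b * w'); rewrite ht !mulrA.
    by move=> [w' ->]; exists (w * w'); rewrite hw mulrA.
  + move=> [h1 h2]; split.
      by apply/(K2 hz) => x hx; apply/(h1 x).1.
    have [w hw] := (h2 c).2 (ex_intro _ 1 (esym (mulr1 c))).
    by exists w.
- split.
  + move=> [[s hs] [w hw]]; split.
      move=> x; split; last exact: (Lct ht).
      by move=> hx; rewrite /lann hw mulrA hx mul0r.
    move=> y; split.
      by move=> [w' ->]; exists (w' * c * a); rewrite ht !mulrA.
    by move=> [w' ->]; exists (w' * s); rewrite hs mulrA.
  + move=> [h1 h2]; split.
      have [w hw] := (h2 b).2 (ex_intro _ 1 (esym (mul1r b))).
      by exists w.
    by apply/(K3 hz) => x hx; apply/(h1 x).1.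
- split.
  + move=> [[s hs] [w hw]]; split.
      move=> x; split; last exact: (Lct ht).
      by move=> hx; rewrite /lann hw mulrA hx mul0r.
    move=> x; split; last exact: (Rbt ht).
    by move=> hx; rewrite /rann hs -mulrA hx mulr0.
  + move=> [h1 h2]; split.
      by apply/(K2 hz) => x hx; apply/(h2 x).1.
    by apply/(K3 hz) => x hx; apply/(h1 x).1.
Qed.
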